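(* Let $n\ge 2$, $\zeta=2\pi/n$, $s_k=2\sin(k\pi/n)$, consider $V$ as in the context with $\sigma=1$, and define for $a>0$ $$S(a)=\frac{1}{as_1}-\frac{1}{2s_1^2}\sum_{k=1}^{n-1}W'(a^2s_k^2)\,s_k^2.$$ Then $S(a)\to\infty$ as $a\to0^+$ and $S(a)\to0$ as $a\to+\infty$; consequently there is at least one $\alpha>0$ with $S(\alpha)=1$, and for any such $\alpha$ the configuration $\mathbf a=(a_1,\dots,a_n)$ with $a_j=\alpha e^{ij\zeta}$ (identifying $\mathbb R^2$ with $\mathbb C$) is a critical point of $V$ (a circular equilibrium).
   Context: For $u=(u_1,\dots,u_n)\in(\mathbb R^2)^n$ let $$V(u)=\sum_{j=1}^{n-1}U(|u_{j+1}-u_j|^2)+U(|u_n-u_1|^2)+\sum_{1\le j<k\le n}W(|u_j-u_k|^2),$$ where $U(x)=x-2x^{1/2}$ and $W\in C^2((0,\infty))$ satisfies $\lim_{x\to0}W(x)=\lim_{x\to0}(-W'(x))=+\infty$ and $\lim_{x\to\infty}W(x)=\lim_{x\to\infty}W'(x)=0$. $V$ is defined on $\Omega=\{u\in\mathbb R^{2n}:u_j\ne u_k\text{ for }j\ne k\}$. *)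

(* Defs.v *)
From Stdlib Require Import Reals Lra Lia.
From Coquelicot Require Import Coquelicot.
Open Scope R_scope.

Definition sqdist (p q : R * R) : R :=
  (fst p - fst q) ^ 2 + (snd p - snd q) ^ 2.

Definition U (x : R) : R := x - 2 * sqrt x.

(* A configuration u = (u_1,...,u_n) is a function nat -> R*R, indices 1..n. *)
Definition V (W : R -> R) (n : nat) (u : nat -> R * R) : R :=
  sum_n_m (fun j => U (sqdist (u (S j)) (u j))) 1 (n - 1)
  + U (sqdist (u n) (u 1%nat))
  + sum_n_m (fun j => sum_n_m (fun k => W (sqdist (u j) (u k))) (S j) n) 1 n.

Definition in_Omega (n : nat) (u : nat -> R * R) : Prop :=
  forall j k : nat, (1 <= j <= n)%nat -> (1 <= k <= n)%nat -> j <> k -> u j <> u k.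

Definition shift (u : nat -> R * R) (j : nat) (c : bool) (t : R) : nat -> R * R :=
  fun i => if Nat.eqb i j then
             (if c then (fst (u i), snd (u i) + t) else (fst (u i) + t, snd (u i)))
           else u i.

Definition is_critical_point (W : R -> R) (n : nat) (u : nat -> R * R) : Prop :=
  forall (j : nat) (c : bool), (1 <= j <= n)%nat ->
    is_derive (fun t => V W n (shift u j c t)) 0 0.

Definition s (n k : nat) : R := 2 * sin (INR k * PI / INR n).

Definition Sfun (W : R -> R) (n : nat) (a : R) : R :=
  / (a * s n 1) - / (2 * (s n 1) ^ 2) *
    sum_n_m (fun k => Derive W (a ^ 2 * (s n k) ^ 2) * (s n k) ^ 2) 1 (n - 1).

Definition circ_config (n : nat) (alpha : R) : nat -> R * R :=
  fun j => (alpha * cos (INR j * (2 * PI / INR n)),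
            alpha * sin (INR j * (2 * PI / INR n))).

(* Main.v *)
Require Import Defs.
From Stdlib Require Import Reals Lra Lia Arith.
From Coquelicot Require Import Coquelicot.
Open Scope R_scope.

Ltac rfix := match goal with |- ?x = ?y => change (@eq R x y) end.

Lemma sR_plus (a b : R) : plus a b = a + b. Proof. reflexivity. Qed.
Lemma sR_zero : (zero : R) = 0. Proof. reflexivity. Qed.

Lemma sum_shift (f : nat -> R) a b k :
  sum_n_m f (a + k) (b + k) = sum_n_m (fun i => f (i + k)%nat) a b.
Proof.
  revert f; induction k; intro f.
  - rewrite !Nat.add_0_r. apply sum_n_m_ext; intro i; f_equal; lia.
  - replace (a + S k)%nat with (S (a + k)) by lia.
    replace (b + S k)%nat with (S (b + k)) by lia.
    rewrite <- sum_n_m_S.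
    rewrite (IHk (fun i => f (S i))). apply sum_n_m_ext; intro; f_equal; lia.
Qed.

Lemma sum_rev (f : nat -> R) a b :
  sum_n_m f a b = sum_n_m (fun i => f (a + b - i)%nat) a b.
Proof.
  destruct (le_lt_dec a b) as [H|H]; [|now rewrite !sum_n_m_zero].
  remember (b - a)%nat as d. replace b with (a + d)%nat by lia. clear b H Heqd.
  revert a. induction d; intro a.
  - rewrite Nat.add_0_r, !sum_n_n. f_equal; lia.
  - replace (a + S d)%nat with (S (a + d)) by lia.
    rewrite (sum_Sn_m f a) by lia.
    rewrite (sum_n_Sm (fun i => f (a + S (a + d) - i)%nat) a (a+d)) by lia.
    replace (S (a + d)) with (S a + d)%nat by lia.
    rewrite IHd. unfold plus; simpl.
    replace (a + S (a + d) - S (a + d))%nat with a by lia.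
    rewrite Rplus_comm. apply Rplus_eq_compat_r.
    replace (S a + d)%nat with (S (a + d)) by lia.
    rewrite <- sum_n_m_S.
    apply sum_n_m_ext_loc; intros i Hi; f_equal; lia.
Qed.

Lemma sum_delta (f : nat -> R) a b j :
  sum_n_m (fun i => if Nat.eqb i j then f i else 0) a b =
  if (Nat.leb a j && Nat.leb j b)%bool then f j else 0.
Proof.
  destruct (le_lt_dec a b) as [H|H].
  2:{ rewrite sum_n_m_zero by lia.
      destruct (Nat.leb_spec a j), (Nat.leb_spec j b); simpl; try reflexivity; lia. }
  remember (b - a)%nat as d. replace b with (a + d)%nat by lia. clear b H Heqd.
  induction d.
  - rewrite Nat.add_0_r, sum_n_n.
    destruct (Nat.eqb_spec a j); destruct (Nat.leb_spec a j), (Nat.leb_spec j a); simpl;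
      subst; try reflexivity; lia.
  - replace (a + S d)%nat with (S (a + d)) by lia.
    rewrite sum_n_Sm by lia. rewrite IHd, sR_plus.
    destruct (Nat.eqb_spec (S (a+d)) j);
    destruct (Nat.leb_spec a j), (Nat.leb_spec j (a+d)), (Nat.leb_spec j (S (a+d))); simpl;
      subst; try lra; lia.
Qed.

Lemma sum_R_ext (f g : nat -> R) a b :
  (forall k, (a <= k <= b)%nat -> f k = g k) -> sum_n_m f a b = sum_n_m g a b.
Proof. apply sum_n_m_ext_loc. Qed.

Lemma sum_R_plus (f g : nat -> R) a b :
  sum_n_m (fun k => f k + g k) a b = sum_n_m f a b + sum_n_m g a b.
Proof. exact (sum_n_m_plus (G:=R_AbelianMonoid) f g a b). Qed.

Lemma sum_R_scal (c : R) (f : nat -> R) a b :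
  sum_n_m (fun k => c * f k) a b = c * sum_n_m f a b.
Proof. exact (sum_n_m_mult_l (K:=R_Ring) c f a b). Qed.

Lemma sum_R_opp (f : nat -> R) a b :
  sum_n_m (fun k => - f k) a b = - sum_n_m f a b.
Proof. rewrite (sum_R_ext (fun k => - f k) (fun k => (-1) * f k) a b).
  rewrite sum_R_scal. rfix; ring. intros; ring. Qed.

Lemma sum_R_zero (f : nat -> R) a b :
  (forall k, (a <= k <= b)%nat -> f k = 0) -> sum_n_m f a b = 0.
Proof. intro H. rewrite (sum_R_ext f (fun _ => zero) a b H).
  exact (sum_n_m_const_zero (G:=R_AbelianMonoid) a b). Qed.

Lemma is_derive_sum (f : nat -> R -> R) (f' : nat -> R) a b x :
  (forall i, (a <= i <= b)%nat -> is_derive (f i) x (f' i)) ->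
  is_derive (fun t => sum_n_m (fun i => f i t) a b) x (sum_n_m f' a b).
Proof.
  intro H.
  destruct (le_lt_dec a b) as [Hab|Hab].
  2:{ replace (sum_n_m f' a b) with 0 by (symmetry; exact (sum_n_m_zero (G:=R_AbelianMonoid) f' a b Hab)).
      apply (is_derive_ext (fun _ => 0)).
      { intro t. symmetry. exact (sum_n_m_zero (G:=R_AbelianMonoid) _ a b Hab). }
      exact (is_derive_const (K:=R_AbsRing) (V:=R_NormedModule) 0 x). }
  remember (b - a)%nat as d. replace b with (a + d)%nat in * by lia. clear b Hab Heqd.
  induction d.
  - rewrite Nat.add_0_r in *. rewrite sum_n_n.
    apply (is_derive_ext (f a)). { intro t. symmetry. exact (sum_n_n (G:=R_AbelianMonoid) (fun i => f i t) a). } apply H; lia.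
  - replace (a + S d)%nat with (S (a + d)) in * by lia.
    rewrite sum_n_Sm by lia.
    apply (is_derive_ext (fun t => sum_n_m (fun i => f i t) a (a+d) + f (S (a+d)) t)).
    { intro t. symmetry. exact (sum_n_Sm (G:=R_AbelianMonoid) (fun i => f i t) a (a+d) ltac:(lia)). }
    apply (is_derive_plus (fun t => sum_n_m (fun i => f i t) a (a+d)) (f (S (a+d)))). apply IHd; intros; apply H; lia. apply H; lia.
Qed.

Definition comp (c : bool) (p : R * R) : R := if c then snd p else fst p.
Definition ind (a j : nat) : R := if Nat.eqb a j then 1 else 0.

Lemma sqdist_shift u j c a b t :
  sqdist (shift u j c t a) (shift u j c t b) =
  sqdist (u a) (u b) + 2 * t * ((ind a j - ind b j) * (comp c (u a) - comp c (u b)))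
  + t ^ 2 * (ind a j - ind b j) ^ 2.
Proof.
  unfold sqdist, shift, ind, comp.
  destruct (Nat.eqb a j), (Nat.eqb b j), c; simpl; ring.
Qed.

Lemma deriv_term (F : R -> R) F' u j c a b :
  is_derive F (sqdist (u a) (u b)) F' ->
  is_derive (fun t => F (sqdist (shift u j c t a) (shift u j c t b))) 0
    (F' * (2 * ((ind a j - ind b j) * (comp c (u a) - comp c (u b))))).
Proof.
  intro HF.
  set (A := sqdist (u a) (u b)).
  set (B := (ind a j - ind b j) * (comp c (u a) - comp c (u b))).
  set (C := (ind a j - ind b j) ^ 2).
  apply (is_derive_ext (fun t => F (A + 2 * t * B + t ^ 2 * C))).
  { intro t. now rewrite sqdist_shift. }
  replace (F' * (2 * B)) with (scal (2 * B) F') by (unfold scal; simpl; unfold mult; simpl; ring).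
  apply (is_derive_comp F (fun t => A + 2 * t * B + t ^ 2 * C)).
  - replace (A + 2 * 0 * B + 0 ^ 2 * C) with A by ring. exact HF.
  - auto_derive; [exact I| ring].
Qed.

Lemma is_derive_U x : 0 < x -> is_derive U x (1 - / sqrt x).
Proof.
  intro Hx. unfold U. auto_derive. exact Hx.
  field. apply Rgt_not_eq, sqrt_lt_R0, Hx.
Qed.

Lemma sqdist_pos p q : p <> q -> 0 < sqdist p q.
Proof.
  intro H. destruct p as [p1 p2], q as [q1 q2]. unfold sqdist; simpl.
  destruct (Req_dec p1 q1); destruct (Req_dec p2 q2).
  - subst. congruence.
  - assert (0 < (p2 - q2)^2) by (apply pow2_gt_0; lra). nra.
  - assert (0 < (p1 - q1)^2) by (apply pow2_gt_0; lra). nra.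
  - assert (0 < (p1 - q1)^2) by (apply pow2_gt_0; lra). nra.
Qed.

Definition DV (W : R -> R) (n : nat) (u : nat -> R * R) (j : nat) (c : bool) : R :=
  sum_n_m (fun i => (1 - / sqrt (sqdist (u (S i)) (u i))) *
     (2 * ((ind (S i) j - ind i j) * (comp c (u (S i)) - comp c (u i))))) 1 (n - 1)
  + (1 - / sqrt (sqdist (u n) (u 1%nat))) *
     (2 * ((ind n j - ind 1 j) * (comp c (u n) - comp c (u 1%nat))))
  + sum_n_m (fun a => sum_n_m (fun b => Derive W (sqdist (u a) (u b)) *
     (2 * ((ind a j - ind b j) * (comp c (u a) - comp c (u b))))) (S a) n) 1 n.

Lemma V_derive W n u j c :
  (2 <= n)%nat -> (forall x, 0 < x -> ex_derive W x) -> in_Omega n u ->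
  is_derive (fun t => V W n (shift u j c t)) 0 (DV W n u j c).
Proof.
  intros Hn HW Hu.
  assert (Hp : forall a b, (1 <= a <= n)%nat -> (1 <= b <= n)%nat -> a <> b ->
             0 < sqdist (u a) (u b)).
  { intros a b Ha Hb Hab. apply sqdist_pos. apply Hu; auto. }
  unfold V, DV.
  apply (is_derive_plus (fun t => _ + _) (fun t => sum_n_m _ 1 n)).
  apply (is_derive_plus (fun t => sum_n_m _ 1 (n-1)) (fun t => U _)).
  - apply (is_derive_sum (fun i t => U (sqdist (shift u j c t (S i)) (shift u j c t i)))).
    intros i Hi. apply deriv_term. apply is_derive_U. apply Hp; lia.
  - apply deriv_term. apply is_derive_U. apply Hp; lia.
  - apply (is_derive_sum (fun a t => sum_n_m (fun k => W (sqdist (shift u j c t a) (shift u j c t k))) (S a) n)).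
    intros a Ha.
    apply (is_derive_sum (fun k t => W (sqdist (shift u j c t a) (shift u j c t k)))).
    intros k Hk. apply deriv_term.
    apply Derive_correct. apply HW. apply Hp; lia.
Qed.

Definition th (n : nat) := 2 * PI / INR n.
Definition cs (c : bool) (x : R) := if c then sin x else cos x.
Definition Kf (c : bool) (x : R) := if c then - cos x else sin x.

Lemma comp_circ n al c k : comp c (circ_config n al k) = al * cs c (INR k * th n).
Proof. destruct c; reflexivity. Qed.

Lemma cs_diff c x y : cs c x - cs c (x + y) = cs c x * (1 - cos y) + Kf c x * sin y.
Proof. destruct c; simpl; [rewrite sin_plus | rewrite cos_plus]; ring. Qed.

Lemma cs_2PI c x : cs c (x + 2 * PI) = cs c x.
Proof. destruct c; simpl; [rewrite sin_plus | rewrite cos_plus]; rewrite sin_2PI, cos_2PI; ring. Qed.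

Lemma cs_second c x y : 2 * cs c x - cs c (x - y) - cs c (x + y) = 2 * cs c x * (1 - cos y).
Proof. destruct c; simpl; unfold Rminus; rewrite ?sin_plus, ?cos_plus, ?sin_neg, ?cos_neg; ring. Qed.

Lemma trig_dist A B :
  (cos A - cos B) ^ 2 + (sin A - sin B) ^ 2 = (2 * sin ((A - B) / 2)) ^ 2.
Proof.
  set (h := (A - B) / 2).
  replace A with (B + 2 * h) by (unfold h; field).
  rewrite cos_plus, sin_plus.
  assert (E : (cos B * cos (2 * h) - sin B * sin (2 * h) - cos B) ^ 2 +
    (sin B * cos (2 * h) + cos B * sin (2 * h) - sin B) ^ 2 =
    (sin B ^ 2 + cos B ^ 2) * ((cos (2 * h) - 1) ^ 2 + sin (2 * h) ^ 2)) by ring.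
  rewrite E. rewrite <- !Rsqr_pow2, sin2_cos2, Rmult_1_l. rewrite !Rsqr_pow2.
  rewrite cos_2a_sin, sin_2a.
  assert (P := sin2_cos2 h). rewrite !Rsqr_pow2 in P.
  replace ((1 - 2 * sin h * sin h - 1) ^ 2 + (2 * sin h * cos h) ^ 2) with
    (4 * sin h ^ 2 * (sin h ^ 2 + cos h ^ 2)) by ring.
  rewrite P. ring.
Qed.

Section Circ.
Variable n : nat.
Hypothesis Hn : (2 <= n)%nat.

Lemma INRn_pos : 0 < INR n.
Proof. apply lt_0_INR; lia. Qed.

Lemma sqdist_circ al a b :
  sqdist (circ_config n al a) (circ_config n al b) =
  al ^ 2 * (2 * sin ((INR a - INR b) * PI / INR n)) ^ 2.
Proof.
  assert (Hn0 := INRn_pos).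
  unfold sqdist, circ_config; simpl fst; simpl snd.
  replace ((al * cos (INR a * (2 * PI / INR n)) - al * cos (INR b * (2 * PI / INR n))) ^ 2 +
   (al * sin (INR a * (2 * PI / INR n)) - al * sin (INR b * (2 * PI / INR n))) ^ 2)
   with (al ^ 2 * ((cos (INR a * (2 * PI / INR n)) - cos (INR b * (2 * PI / INR n))) ^ 2 +
   (sin (INR a * (2 * PI / INR n)) - sin (INR b * (2 * PI / INR n))) ^ 2)) by ring.
  rewrite trig_dist. f_equal. f_equal. f_equal. f_equal. field. lra.
Qed.

Lemma s_neg x : (2 * sin (- x * PI / INR n)) ^ 2 = (2 * sin (x * PI / INR n)) ^ 2.
Proof.
  replace (- x * PI / INR n) with (- (x * PI / INR n)) by (unfold Rdiv; ring).
  rewrite sin_neg. ring.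
Qed.

Lemma s_refl m : (m <= n)%nat -> s n (n - m) = s n m.
Proof.
  intro H. assert (Hn0 := INRn_pos). unfold s. rewrite minus_INR by exact H.
  replace ((INR n - INR m) * PI / INR n) with (PI - INR m * PI / INR n) by (field; lra).
  rewrite sin_PI_x. reflexivity.
Qed.

Lemma cos_s m : cos (INR m * th n) = 1 - (s n m) ^ 2 / 2.
Proof.
  assert (Hn0 := INRn_pos). unfold s, th.
  replace (INR m * (2 * PI / INR n)) with (2 * (INR m * PI / INR n)) by (field; lra).
  rewrite cos_2a_sin. field.
Qed.

Lemma sin_refl m : (m <= n)%nat -> sin (INR (n - m) * th n) = - sin (INR m * th n).
Proof.
  intro H. assert (Hn0 := INRn_pos). unfold th. rewrite minus_INR by exact H.
  replace ((INR n - INR m) * (2 * PI / INR n)) with (- (INR m * (2 * PI / INR n)) + 2 * PI) by (field; lra).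
  rewrite sin_plus, sin_2PI, cos_2PI, sin_neg. ring.
Qed.

Lemma s_pos k : (1 <= k <= n - 1)%nat -> 0 < s n k.
Proof.
  intro H. assert (Hn0 := INRn_pos). unfold s.
  assert (Hk1 : 1 <= INR k) by (apply (le_INR 1); lia).
  assert (Hk2 : INR k < INR n) by (apply lt_INR; lia).
  assert (0 < INR k * PI / INR n).
  { apply Rdiv_lt_0_compat; [apply Rmult_lt_0_compat; [lra | apply PI_RGT_0] | lra]. }
  assert (INR k * PI / INR n < PI).
  { apply (Rmult_lt_reg_r (INR n)); [lra|]. unfold Rdiv. rewrite Rmult_assoc, Rinv_l by lra.
    assert (HP := PI_RGT_0). nra. }
  assert (0 < sin (INR k * PI / INR n)) by (apply sin_gt_0; lra). lra.
Qed.

End Circ.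

Lemma Wpart_generic (G : nat -> nat -> R) n j :
  (1 <= j <= n)%nat ->
  sum_n_m (fun a => sum_n_m (fun b => (ind a j - ind b j) * G a b) (S a) n) 1 n =
  sum_n_m (fun b => G j b) (S j) n - sum_n_m (fun a => G a j) 1 (j - 1).
Proof.
  intro Hj.
  rewrite (sum_R_ext _ (fun a => (if Nat.eqb a j then sum_n_m (fun b => G a b) (S a) n else 0)
      + - (if (Nat.leb 1 a && Nat.leb a (j-1))%bool then G a j else 0))).
  2:{ intros a Ha.
      rewrite (sum_R_ext _ (fun b => (if Nat.eqb a j then G a b else 0) + - (if Nat.eqb b j then G a b else 0))).
      2:{ intros b Hb. unfold ind. destruct (Nat.eqb a j), (Nat.eqb b j); ring. }
      rewrite sum_R_plus, sum_R_opp, sum_delta. f_equal.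
      - destruct (Nat.eqb a j). reflexivity. apply sum_R_zero; auto.
      - f_equal. destruct (Nat.leb_spec (S a) j), (Nat.leb_spec j n), (Nat.leb_spec 1 a), (Nat.leb_spec a (j-1));
          simpl; try reflexivity; lia. }
  rewrite sum_R_plus, sum_R_opp, sum_delta.
  replace (Nat.leb 1 j && Nat.leb j n)%bool with true
    by (destruct (Nat.leb_spec 1 j), (Nat.leb_spec j n); simpl; auto; lia).
  assert (E : sum_n_m (fun a => if (Nat.leb 1 a && Nat.leb a (j-1))%bool then G a j else 0) 1 n
      = sum_n_m (fun a => G a j) 1 (j - 1)).
  { rewrite (sum_n_m_Chasles _ 1 (j-1) n) by lia. change (@plus R_AbelianMonoid) with Rplus.
    rewrite (sum_R_zero _ (S (j-1)) n).
    2:{ intros k Hk. destruct (Nat.leb_spec 1 k), (Nat.leb_spec k (j-1)); simpl; auto; lia. }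
    rewrite Rplus_0_r. apply sum_R_ext. intros k Hk.
    destruct (Nat.leb_spec 1 k), (Nat.leb_spec k (j-1)); simpl; auto; lia. }
  unfold Rminus. f_equal. f_equal. exact E.
Qed.

Section W.
Variable W : R -> R.
Variable n : nat.
Hypothesis Hn : (2 <= n)%nat.
Variable al : R.
Variable c : bool.
Variable j : nat.
Hypothesis Hj : (1 <= j <= n)%nat.

Let u := circ_config n al.
Let x := INR j * th n.
Let G a b := Derive W (sqdist (u a) (u b)) * (2 * (comp c (u a) - comp c (u b))).
Let H m := Derive W (al ^ 2 * (s n m) ^ 2) * (2 * (al * (cs c x - cs c (x + INR m * th n)))).

Lemma sinsum0 :
  sum_n_m (fun m => Derive W (al ^ 2 * (s n m) ^ 2) * sin (INR m * th n)) 1 (n - 1) = 0.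
Proof.
  set (X := sum_n_m _ 1 (n-1)).
  assert (E : X = sum_n_m (fun m => - (Derive W (al ^ 2 * (s n m) ^ 2) * sin (INR m * th n))) 1 (n - 1)).
  { unfold X. rewrite sum_rev. apply sum_R_ext. intros m Hm.
    replace (1 + (n - 1) - m)%nat with (n - m)%nat by lia.
    rewrite s_refl, sin_refl by lia. ring. }
  rewrite sum_R_opp in E. fold X in E. lra.
Qed.

Lemma step1 : sum_n_m (fun b => G j b) (S j) n = sum_n_m H 1 (n - j).
Proof.
  assert (E := sum_shift (fun b => G j b) 1 (n - j) j).
  replace (n - j + j)%nat with n in E by lia. simpl in E. rewrite E.
  apply sum_R_ext. intros m Hm. unfold G, H, u.
  rewrite sqdist_circ by lia. rewrite plus_INR.
  replace (INR j - (INR m + INR j)) with (- INR m) by ring. rewrite s_neg.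
  rewrite !comp_circ. unfold x. rewrite plus_INR. unfold s.
  replace ((INR m + INR j) * th n) with (INR j * th n + INR m * th n) by ring. ring.
Qed.

Lemma step2 : sum_n_m (fun a => G a j) 1 (j - 1) = - sum_n_m H (S (n - j)) (n - 1).
Proof.
  assert (Hn0 := INRn_pos n Hn).
  rewrite sum_rev.
  rewrite (sum_R_ext _ (fun i => - H (n - i)%nat)).
  2:{ intros i Hi. replace (1 + (j - 1) - i)%nat with (j - i)%nat by lia.
      unfold G, H, u. rewrite sqdist_circ by lia. rewrite minus_INR by lia.
      replace (INR j - INR i - INR j) with (- INR i) by ring. rewrite s_neg by lia.
      rewrite s_refl by lia. rewrite !comp_circ. unfold x. rewrite !minus_INR by lia.
      replace (INR j * th n + (INR n - INR i) * th n) with ((INR j - INR i) * th n + 2 * PI)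
        by (unfold th; field; lra).
      rewrite cs_2PI. unfold s. ring. }
  rewrite sum_R_opp. f_equal.
  rewrite sum_rev.
  assert (E := sum_shift H 1 (j - 1) (n - j)).
  replace (1 + (n - j))%nat with (S (n - j)) in E by lia.
  replace (j - 1 + (n - j))%nat with (n - 1)%nat in E by lia.
  rewrite E. apply sum_R_ext. intros i Hi. f_equal. lia.
Qed.

Lemma Wpart_circ :
  sum_n_m (fun b => G j b) (S j) n - sum_n_m (fun a => G a j) 1 (j - 1) =
  al * cs c x * sum_n_m (fun m => Derive W (al ^ 2 * (s n m) ^ 2) * (s n m) ^ 2) 1 (n - 1).
Proof.
  rewrite step1, step2.
  assert (E : sum_n_m H 1 (n - 1) = plus (sum_n_m H 1 (n - j)) (sum_n_m H (S (n - j)) (n - 1)))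
    by (apply sum_n_m_Chasles; lia).
  change (@plus R_AbelianMonoid) with Rplus in E.
  replace (sum_n_m H 1 (n - j) - - sum_n_m H (S (n - j)) (n - 1)) with (sum_n_m H 1 (n - 1))
    by (rewrite E; rfix; ring).
  rewrite (sum_R_ext H (fun m => al * cs c x * (Derive W (al ^ 2 * (s n m) ^ 2) * (s n m) ^ 2)
     + 2 * al * Kf c x * (Derive W (al ^ 2 * (s n m) ^ 2) * sin (INR m * th n)))).
  2:{ intros m Hm. unfold H. rewrite cs_diff, cos_s by lia. field. }
  rewrite sum_R_plus, !sum_R_scal, sinsum0. ring.
Qed.

End W.

Section U.
Variable n : nat.
Hypothesis Hn : (2 <= n)%nat.
Variable al : R.
Hypothesis Hal : 0 < al.
Variable c : bool.
Variable j : nat.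
Hypothesis Hj : (1 <= j <= n)%nat.

Let u := circ_config n al.
Let x := INR j * th n.

Lemma sqrt_consec i : sqrt (sqdist (u (S i)) (u i)) = al * s n 1.
Proof.
  unfold u. rewrite sqdist_circ by lia.
  replace (INR (S i) - INR i) with (INR 1) by (rewrite (S_INR i); simpl; ring).
  fold (s n 1).
  replace (al ^ 2 * s n 1 ^ 2) with ((al * s n 1) ^ 2) by ring.
  apply sqrt_pow2. assert (0 < s n 1) by (apply s_pos; lia). nra.
Qed.

Lemma sqrt_wrap : sqrt (sqdist (u n) (u 1%nat)) = al * s n 1.
Proof.
  unfold u. rewrite sqdist_circ by lia.
  rewrite <- minus_INR by lia. fold (s n (n - 1)). rewrite s_refl by lia.
  replace (al ^ 2 * s n 1 ^ 2) with ((al * s n 1) ^ 2) by ring.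
  apply sqrt_pow2. assert (0 < s n 1) by (apply s_pos; lia). nra.
Qed.

Lemma Upart_circ :
  sum_n_m (fun i => (1 - / sqrt (sqdist (u (S i)) (u i))) *
     (2 * ((ind (S i) j - ind i j) * (comp c (u (S i)) - comp c (u i))))) 1 (n - 1)
  + (1 - / sqrt (sqdist (u n) (u 1%nat))) *
     (2 * ((ind n j - ind 1 j) * (comp c (u n) - comp c (u 1%nat))))
  = 2 * (1 - / (al * s n 1)) * (al * cs c x * (s n 1) ^ 2).
Proof.
  assert (Hn0 := INRn_pos n Hn).
  set (k := 1 - / (al * s n 1)).
  set (g := fun i => comp c (u (S i)) - comp c (u i)).
  rewrite sqrt_wrap.
  rewrite (sum_R_ext _ (fun i => (2 * k) * ((if Nat.eqb i (j - 1) then g i else 0)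
       + - (if Nat.eqb i j then g i else 0)))).
  2:{ intros i Hi. rewrite sqrt_consec. fold k. unfold ind, g.
      destruct (Nat.eqb_spec (S i) j), (Nat.eqb_spec i (j - 1)), (Nat.eqb_spec i j);
        try lia; ring. }
  rewrite sum_R_scal, sum_R_plus, sum_R_opp, !sum_delta.
  fold k.
  assert (Hc : cos (th n) = 1 - (s n 1) ^ 2 / 2).
  { rewrite <- cos_s by lia. simpl INR. f_equal; ring. }
  assert (key : forall y, 2 * cs c y - cs c (y - th n) - cs c (y + th n) = cs c y * (s n 1) ^ 2).
  { intro y. rewrite cs_second, Hc. field. }
  unfold g, ind, u. rewrite !comp_circ. fold x.
  destruct (Nat.leb_spec 1 (j-1)), (Nat.leb_spec (j-1) (n-1)), (Nat.leb_spec 1 j),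
    (Nat.leb_spec j (n-1)), (Nat.eqb_spec n j), (Nat.eqb_spec 1 j); cbn [andb]; try lia.
  - (* middle *)
    transitivity (2*k*(al*(2 * cs c x - cs c (x - th n) - cs c (x + th n)))).
    2: rewrite key; ring.
    replace (S (j - 1)) with j by lia. fold x.
    rewrite (S_INR j), minus_INR by lia. simpl (INR 1).
    replace ((INR j - 1) * th n) with (x - th n) by (unfold x; ring).
    replace ((INR j + 1) * th n) with (x + th n) by (unfold x; ring). ring.
  - (* j = n *)
    subst j.
    transitivity (2*k*(al*(2 * cs c x - cs c (x - th n) - cs c (x + th n)))).
    2: rewrite key; ring.
    replace (S (n - 1)) with n by lia. fold x.
    rewrite minus_INR by lia. simpl (INR 1).
    replace ((INR n - 1) * th n) with (x - th n) by (unfold x; ring).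
    replace (x + th n) with (1 * th n + 2 * PI) by (unfold x, th; field; lra).
    rewrite cs_2PI. ring.
  - (* j = 1 *)
    subst j.
    transitivity (2*k*(al*(2 * cs c x - cs c (x - th n) - cs c (x + th n)))).
    2: rewrite key; ring.
    unfold x. simpl (INR 1).
    replace (1 * th n - th n) with (INR n * th n - 2 * PI) by (unfold th; field; lra).
    rewrite <- (cs_2PI c (INR n * th n - 2 * PI)).
    replace (INR n * th n - 2 * PI + 2 * PI) with (INR n * th n) by ring.
    replace (INR (S 1)) with (1 + 1) by (simpl; ring).
    replace ((1 + 1) * th n) with (1 * th n + th n) by ring. ring.
Qed.

End U.

Lemma lim_lin c : 0 < c -> filterlim (fun a => a * c) (Rbar_locally p_infty) (Rbar_locally p_infty).
Proof.
  intros Hc P [M HM]. exists (Rabs M / c). intros a Ha. apply HM.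
  assert (a * c > Rabs M).
  { apply (Rmult_lt_compat_r c) in Ha; auto. unfold Rdiv in Ha.
    rewrite Rmult_assoc, Rinv_l in Ha by lra. lra. }
  assert (M <= Rabs M) by apply Rle_abs. lra.
Qed.

Lemma lim_sq c : 0 < c -> filterlim (fun a => a ^ 2 * c) (Rbar_locally p_infty) (Rbar_locally p_infty).
Proof.
  intros Hc P [M HM]. exists (Rmax 1 (Rabs M / c)). intros a Ha. apply HM.
  assert (H1 := Rmax_l 1 (Rabs M / c)). assert (H2 := Rmax_r 1 (Rabs M / c)).
  assert (a * c > Rabs M).
  { assert (Ha' : Rabs M / c < a) by lra.
    apply (Rmult_lt_compat_r c) in Ha'; auto. unfold Rdiv in Ha'.
    rewrite Rmult_assoc, Rinv_l in Ha' by lra. lra. }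
  assert (M <= Rabs M) by apply Rle_abs.
  assert (0 <= a * c * (a - 1)) by (apply Rmult_le_pos; [apply Rmult_le_pos|]; lra).
  assert (a ^ 2 * c = a * c + a * c * (a - 1)) by ring. lra.
Qed.

Lemma is_lim_sum (f : nat -> R -> R) a b x :
  (forall k, (a <= k <= b)%nat -> is_lim (f k) x 0) ->
  is_lim (fun y => sum_n_m (fun k => f k y) a b) x 0.
Proof.
  intro H.
  destruct (le_lt_dec a b) as [Hab|Hab].
  2:{ apply (is_lim_ext (fun _ => 0)).
      { intro t. symmetry. exact (sum_n_m_zero (G:=R_AbelianMonoid) _ a b Hab). }
      apply is_lim_const. }
  remember (b - a)%nat as d. replace b with (a + d)%nat in * by lia. clear b Hab Heqd.
  induction d.
  - rewrite Nat.add_0_r in *.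
    apply (is_lim_ext (f a)). { intro t. symmetry. exact (sum_n_n (G:=R_AbelianMonoid) (fun i => f i t) a). }
    apply H; lia.
  - replace (a + S d)%nat with (S (a + d)) in * by lia.
    apply (is_lim_ext (fun t => sum_n_m (fun i => f i t) a (a+d) + f (S (a+d)) t)).
    { intro t. symmetry. exact (sum_n_Sm (G:=R_AbelianMonoid) (fun i => f i t) a (a+d) ltac:(lia)). }
    replace (Finite 0) with (Finite (0 + 0)) by (f_equal; ring).
    apply is_lim_plus'. apply IHd; intros; apply H; lia. apply H; lia.
Qed.

Lemma s_bound n k : (s n k) ^ 2 <= 4.
Proof. unfold s. destruct (SIN_bound (INR k * PI / INR n)). nra. Qed.

Section Main.
Variable n : nat.
Variable W : R -> R.
Hypothesis Hn : (2 <= n)%nat.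
Hypothesis HW1 : forall x, 0 < x -> ex_derive W x.
Hypothesis HW2 : forall x, 0 < x -> ex_derive (Derive W) x.
Hypothesis HdW0 : filterlim (fun x => - Derive W x) (at_right 0) (Rbar_locally p_infty).
Hypothesis HdWinf : filterlim (Derive W) (Rbar_locally p_infty) (locally 0).

Lemma s1_pos : 0 < s n 1.
Proof. apply s_pos; lia. Qed.

Lemma lim0 : filterlim (Sfun W n) (at_right 0) (Rbar_locally p_infty).
Proof.
  intros P [M HM].
  assert (HdW := HdW0 (fun y => 0 < y) (ex_intro _ 0 (fun x Hx => Hx))).
  destruct HdW as [d Hd].
  assert (Hs1 := s1_pos). assert (Hd0 := cond_pos d).
  assert (HM1 : 0 < Rabs M + 1) by (assert (0 <= Rabs M) by apply Rabs_pos; lra).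
  set (eps := Rmin (Rmin 1 (d / 4)) (/ (s n 1 * (Rabs M + 1)))).
  assert (Heps : 0 < eps).
  { unfold eps. apply Rmin_pos; [apply Rmin_pos; lra|].
    apply Rinv_0_lt_compat. nra. }
  exists (mkposreal eps Heps). intros y Hy Hy0.
  change (Rabs (y - 0) < eps) in Hy. rewrite Rminus_0_r, Rabs_pos_eq in Hy by lra.
  assert (Hy1 : y < 1) by (assert (H := Rmin_l (Rmin 1 (d/4)) (/ (s n 1 * (Rabs M + 1))));
     assert (H' := Rmin_l 1 (d/4)); unfold eps in Hy; lra).
  assert (Hy2 : y < d / 4) by (assert (H := Rmin_l (Rmin 1 (d/4)) (/ (s n 1 * (Rabs M + 1))));
     assert (H' := Rmin_r 1 (d/4)); unfold eps in Hy; lra).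
  assert (Hy3 : y < / (s n 1 * (Rabs M + 1))) by
     (assert (H := Rmin_r (Rmin 1 (d/4)) (/ (s n 1 * (Rabs M + 1)))); unfold eps in Hy; lra).
  apply HM. unfold Sfun.
  assert (Hsum : sum_n_m (fun k => Derive W (y ^ 2 * s n k ^ 2) * s n k ^ 2) 1 (n - 1) <= 0).
  { apply Rle_trans with (sum_n_m (fun _ => 0) 1 (n - 1)).
    - apply sum_n_m_le. intro k.
      destruct (Req_dec (s n k) 0) as [E|E].
      + rewrite E. lra.
      + assert (Hp : 0 < y ^ 2 * s n k ^ 2).
        { apply Rmult_lt_0_compat. nra. apply pow2_gt_0; auto. }
        assert (Hb : ball 0 d (y ^ 2 * s n k ^ 2)).
        { change (Rabs (y ^ 2 * s n k ^ 2 - 0) < d). rewrite Rminus_0_r, Rabs_pos_eq by lra.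
          assert (Hk := s_bound n k). nra. }
        assert (Hneg := Hd _ Hb Hp).
        assert (HD : Derive W (y ^ 2 * s n k ^ 2) <= 0) by (unfold filtermap in Hneg; lra).
        assert (0 <= s n k ^ 2) by nra.
        generalize dependent (Derive W (y ^ 2 * s n k ^ 2)). intros. nra.
    - right. apply sum_R_zero. auto. }
  assert (Hinv : Rabs M + 1 < / (y * s n 1)).
  { rewrite Rinv_mult. 
    apply (Rmult_lt_reg_l (y * s n 1)). nra.
    replace (y * s n 1 * (/ y * / s n 1)) with 1 by (field; lra).
    apply (Rmult_lt_compat_r (s n 1 * (Rabs M + 1))) in Hy3; [|nra].
    rewrite Rinv_l in Hy3 by nra. nra. }
  assert (0 < / (2 * s n 1 ^ 2)) by (apply Rinv_0_lt_compat; nra).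
  assert (M <= Rabs M) by apply Rle_abs.
  nra.
Qed.

Lemma liminf : filterlim (Sfun W n) (Rbar_locally p_infty) (locally 0).
Proof.
  change (is_lim (Sfun W n) p_infty 0). unfold Sfun.
  assert (Hs1 := s1_pos).
  assert (L1 : is_lim (fun a => / (a * s n 1)) p_infty 0).
  { apply (is_lim_inv (fun a => a * s n 1) p_infty p_infty).
    apply lim_lin; auto. discriminate. }
  assert (L2 : is_lim (fun a => / (2 * s n 1 ^ 2) *
     sum_n_m (fun k => Derive W (a ^ 2 * s n k ^ 2) * s n k ^ 2) 1 (n - 1)) p_infty 0).
  { replace (Finite 0) with (Rbar_mult (/ (2 * s n 1 ^ 2)) 0) by (simpl; f_equal; ring).
    apply is_lim_scal_l.
    apply (is_lim_sum (fun k a => Derive W (a ^ 2 * s n k ^ 2) * s n k ^ 2)).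
    intros k Hk.
    replace (Finite 0) with (Rbar_mult 0 (s n k ^ 2)) by (simpl; f_equal; ring).
    apply (is_lim_scal_r (fun a => Derive W (a ^ 2 * s n k ^ 2))).
    assert (Hk0 : 0 < s n k ^ 2) by (apply pow2_gt_0; apply Rgt_not_eq, s_pos; lia).
    exact (filterlim_comp _ _ _ _ _ _ _ _ (lim_sq _ Hk0) HdWinf). }
  replace (Finite 0) with (Finite (0 - 0)) by (f_equal; ring).
  exact (is_lim_minus' _ _ _ _ _ L1 L2).
Qed.

Lemma Sfun_der a : 0 < a -> ex_derive (fun x => 1 - Sfun W n x) a.
Proof.
  intro Ha. assert (Hs1 := s1_pos). unfold Sfun.
  apply (ex_derive_minus (fun _ => 1)). apply ex_derive_const.
  apply (ex_derive_minus (fun x => / (x * s n 1))).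
  - auto_derive. nra.
  - apply ex_derive_scal.
    eexists. apply (is_derive_sum (fun k x => Derive W (x ^ 2 * s n k ^ 2) * s n k ^ 2)
      (fun k => Derive (fun x => Derive W (x ^ 2 * s n k ^ 2) * s n k ^ 2) a)).
    intros k Hk. apply Derive_correct.
    assert (Hk0 : 0 < s n k ^ 2) by (apply pow2_gt_0; apply Rgt_not_eq, s_pos; lia).
    apply ex_derive_mult; [|apply ex_derive_const].
    apply (ex_derive_comp (Derive W) (fun x => x ^ 2 * s n k ^ 2)).
    + apply HW2. apply Rmult_lt_0_compat; [nra|auto].
    + auto_derive. exact I.
Qed.

Lemma exists_alpha : exists alpha, 0 < alpha /\ Sfun W n alpha = 1.
Proof.
  destruct (lim0 (fun y => 1 < y) (ex_intro _ 1 (fun x Hx => Hx))) as [e He].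
  set (a0 := e / 2).
  assert (Ha0 : 0 < a0) by (unfold a0; assert (H := cond_pos e); lra).
  assert (S0 : 1 < Sfun W n a0).
  { apply He; [| exact Ha0]. change (Rabs (a0 - 0) < e).
    rewrite Rminus_0_r, Rabs_pos_eq by lra. unfold a0. assert (H := cond_pos e); lra. }
  assert (Hl : locally 0 (fun y => y < 1)).
  { exists (mkposreal 1 Rlt_0_1). intros y Hy. change (Rabs (y - 0) < 1) in Hy.
    assert (H := Rle_abs (y - 0)). lra. }
  destruct (liminf _ Hl) as [M HM].
  set (b0 := Rmax a0 M + 1).
  assert (Hb0 : a0 < b0) by (unfold b0; assert (H := Rmax_l a0 M); lra).
  assert (S1 : Sfun W n b0 < 1) by (apply HM; unfold b0; assert (H := Rmax_r a0 M); lra).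
  destruct (Ranalysis5.IVT_interv (fun x => 1 - Sfun W n x) a0 b0) as [z [Hz Ez]].
  - intros a Ha. apply continuity_pt_filterlim. exact (ex_derive_continuous (K:=R_AbsRing) (V:=R_NormedModule) (fun x => 1 - Sfun W n x) a (Sfun_der a ltac:(lra))).
  - exact Hb0.
  - simpl. lra.
  - simpl. lra.
  - exists z. split; [lra|]. simpl in Ez. lra.
Qed.

End Main.

Lemma DV_circ W n al j c : (2 <= n)%nat -> 0 < al -> (1 <= j <= n)%nat ->
  Sfun W n al = 1 -> DV W n (circ_config n al) j c = 0.
Proof.
  intros Hn Hal Hj HS.
  unfold DV. rewrite (Upart_circ n Hn al Hal c j Hj).
  rewrite (sum_R_ext _ (fun a => sum_n_m (fun b => (ind a j - ind b j) *
     (Derive W (sqdist (circ_config n al a) (circ_config n al b)) *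
       (2 * (comp c (circ_config n al a) - comp c (circ_config n al b))))) (S a) n)).
  2:{ intros a Ha. apply sum_R_ext. intros b Hb. ring. }
  rewrite (Wpart_generic (fun a b => Derive W (sqdist (circ_config n al a) (circ_config n al b)) *
       (2 * (comp c (circ_config n al a) - comp c (circ_config n al b)))) n j Hj).
  rewrite (Wpart_circ W n Hn al c j Hj).
  set (Sg := sum_n_m _ 1 (n - 1)).
  unfold Sfun in HS. fold Sg in HS.
  assert (Hs1 := s_pos n Hn 1 ltac:(lia)).
  assert (E : / (2 * s n 1 ^ 2) * Sg = / (al * s n 1) - 1) by lra.
  assert (E2 : @eq R Sg (2 * s n 1 ^ 2 * (/ (2 * s n 1 ^ 2) * Sg))).
  { rewrite <- Rmult_assoc, Rinv_r, Rmult_1_l. reflexivity. apply Rgt_not_eq. apply Rmult_lt_0_compat; [lra| apply pow2_gt_0; lra]. }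
  rewrite E2, E. rfix. field. lra.
Qed.

Lemma circ_Omega n al : (2 <= n)%nat -> 0 < al -> in_Omega n (circ_config n al).
Proof.
  intros Hn Hal a b Ha Hb Hab E.
  assert (Z : sqdist (circ_config n al a) (circ_config n al b) = 0)
    by (rewrite E; unfold sqdist; ring).
  rewrite sqdist_circ in Z by lia.
  destruct (Nat.lt_gt_cases a b) as [[Hlt|Hgt] _]; [exact Hab| |].
  - replace (INR a - INR b) with (- INR (b - a)) in Z by (rewrite minus_INR by lia; ring).
    rewrite s_neg in Z by lia. fold (s n (b - a)) in Z.
    assert (0 < s n (b - a)) by (apply s_pos; lia).
    assert (0 < al ^ 2 * s n (b - a) ^ 2) by (apply Rmult_lt_0_compat; apply pow2_gt_0; lra).
    lra.
  - replace (INR a - INR b) with (INR (a - b)) in Z by (rewrite minus_INR by lia; ring).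
    fold (s n (a - b)) in Z.
    assert (0 < s n (a - b)) by (apply s_pos; lia).
    assert (0 < al ^ 2 * s n (a - b) ^ 2) by (apply Rmult_lt_0_compat; apply pow2_gt_0; lra).
    lra.
Qed.

Theorem corollary2 (n : nat) (W : R -> R)
  (Hn : (2 <= n)%nat)
  (HW1 : forall x, 0 < x -> ex_derive W x)
  (HW2 : forall x, 0 < x -> ex_derive (Derive W) x)
  (HW2c : forall x, 0 < x -> continuous (Derive_n W 2) x)
  (HW0 : filterlim W (at_right 0) (Rbar_locally p_infty))
  (HdW0 : filterlim (fun x => - Derive W x) (at_right 0) (Rbar_locally p_infty))
  (HWinf : filterlim W (Rbar_locally p_infty) (locally 0))
  (HdWinf : filterlim (Derive W) (Rbar_locally p_infty) (locally 0)) :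
  filterlim (Sfun W n) (at_right 0) (Rbar_locally p_infty) /\
  filterlim (Sfun W n) (Rbar_locally p_infty) (locally 0) /\
  (exists alpha, 0 < alpha /\ Sfun W n alpha = 1) /\
  (forall alpha, 0 < alpha -> Sfun W n alpha = 1 ->
     in_Omega n (circ_config n alpha) /\
     is_critical_point W n (circ_config n alpha)).
Proof.
  split; [exact (lim0 n W Hn HdW0)|].
  split; [exact (liminf n W Hn HdWinf)|].
  split; [exact (exists_alpha n W Hn HW2 HdW0 HdWinf)|].
  intros al Hal HS. split; [apply circ_Omega; auto|].
  intros j c Hj.
  assert (HD := V_derive W n (circ_config n al) j c Hn HW1 (circ_Omega n al Hn Hal)).
  rewrite (DV_circ W n al j c Hn Hal Hj HS) in HD. exact HD.
Qed.
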